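(* Let $M>0$ and let $b:[0,1]\to\mathbb R$ satisfy $|b(a)|\le M$ for all $a$ and $b(0)=1$. Then there exist $f\in C^{1/2}_c[\frac14,\frac12]$ and $u_0\in(0,\frac{1}{80M})$ such that $L_af(u_0)$ does not converge to $L_0f(u_0)$ as $a\to0^+$.
   Context: For $a>0$ and $f\in L^1(\mathbb R)$, $L_af(u)=\frac{1}{\sqrt{2\pi}}\frac{e^{i\pi/4}}{\sqrt{2a}}\int_{\mathbb R}f(t)e^{-i\frac{(b(a)u-t)^2}{4a}}dt$, and $L_0f(u)=f(b(0)u)=f(u)$. $C^{1/2}_c[\frac14,\frac12]$ denotes complex-valued functions supported in $[\frac14,\frac12]$ that are Hölder continuous of exponent $\frac12$, i.e. $|f(t_1)-f(t_2)|\le C|t_1-t_2|^{1/2}$ for all $t_1,t_2$. *)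

(* Defs.v *)
From Stdlib Require Import Reals.
From Coquelicot Require Import Coquelicot.
Open Scope R_scope.

Definition cexpi (x : R) : C := (cos x, sin x).

(* L_a f(u) for a > 0: integral over R as Coquelicot's generalized
   (improper) Riemann integral from -oo to +oo of a complex-valued function *)
Definition Lop (b : R -> R) (a : R) (f : R -> C) (u : R) : C :=
  Cmult (RtoC (/ sqrt (2 * PI)))
    (Cmult (Cmult (cexpi (PI / 4)) (RtoC (/ sqrt (2 * a))))
      (@RInt_gen C_R_CompleteNormedModule (fun t : R => Cmult (f t) (cexpi (- ((b a * u - t) ^ 2 / (4 * a)))))
         (Rbar_locally m_infty) (Rbar_locally p_infty))).

Definition L0 (b : R -> R) (f : R -> C) (u : R) : C := f (b 0 * u).

Definition Holder_half_supp (f : R -> C) : Prop :=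
  (forall t, (t < 1/4 \/ 1/2 < t) -> f t = RtoC 0) /\
  exists K : R, forall t1 t2, Cmod (Cminus (f t1) (f t2)) <= K * sqrt (Rabs (t1 - t2)).

(* Main.v *)
Require Import Defs.
From Stdlib Require Import Reals.
From Coquelicot Require Import Coquelicot.
From Stdlib Require Import Lra Lia Psatz Classical.
Open Scope R_scope.

Lemma abs_sin_le x : Rabs (sin x) <= Rabs x.
Proof.
  destruct (Rle_lt_dec 1 (Rabs x)) as [H|H].
  { pose proof (SIN_bound x). apply Rle_trans with 1; [|lra].
    apply Rabs_le; lra. }
  assert (HP : 3 < PI) by (pose proof PI2_3_2; lra).
  destruct (Rtotal_order x 0) as [H1|[H1|H1]].
  - rewrite Rabs_left in H by lra.
    assert (sin (-x) < -x) by (apply sin_lt_x; lra).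
    assert (0 < sin (-x)) by (apply sin_gt_0; lra).
    rewrite sin_neg in *. rewrite Rabs_left by lra. rewrite Rabs_left by lra. lra.
  - subst. rewrite sin_0. lra.
  - rewrite Rabs_pos_eq in H by lra.
    assert (sin x < x) by (apply sin_lt_x; lra).
    assert (0 < sin x) by (apply sin_gt_0; lra).
    rewrite !Rabs_pos_eq; lra.
Qed.

Lemma cos_lip x y : Rabs (cos x - cos y) <= Rabs (x - y).
Proof.
  rewrite form2. rewrite !Rabs_mult.
  pose proof (abs_sin_le ((x - y) / 2)).
  assert (Rabs (sin ((x + y) / 2)) <= 1) by (apply Rabs_le; apply SIN_bound).
  assert (Rabs ((x - y) / 2) = Rabs (x - y) / 2).
  { unfold Rdiv. rewrite Rabs_mult. rewrite (Rabs_pos_eq (/2)) by lra. lra. }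
  replace (Rabs (-2)) with 2 by (rewrite Rabs_left; lra).
  pose proof (Rabs_pos (sin ((x - y) / 2))).
  pose proof (Rabs_pos (sin ((x + y) / 2))).
  nra.
Qed.

Lemma sin_lip x y : Rabs (sin x - sin y) <= Rabs (x - y).
Proof.
  rewrite form4. rewrite !Rabs_mult.
  pose proof (abs_sin_le ((x - y) / 2)).
  assert (Rabs (cos ((x + y) / 2)) <= 1) by (apply Rabs_le; apply COS_bound).
  assert (Rabs ((x - y) / 2) = Rabs (x - y) / 2).
  { unfold Rdiv. rewrite Rabs_mult. rewrite (Rabs_pos_eq (/2)) by lra. lra. }
  rewrite Rabs_pos_eq by lra.
  pose proof (Rabs_pos (sin ((x - y) / 2))).
  pose proof (Rabs_pos (cos ((x + y) / 2))).
  nra.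
Qed.

Definition hp (t : R) : R := (t - 1/4) * (1/2 - t).
Definition h (t : R) : R := Rmax 0 (hp t).

Lemma h_ge0 t : 0 <= h t.
Proof. unfold h; apply Rmax_l. Qed.

Lemma h_le t : h t <= 1/64.
Proof. unfold h, hp. pose proof (pow2_ge_0 (t - 3/8)). apply Rmax_lub; nra. Qed.

Lemma h_out t : t <= 1/4 \/ 1/2 <= t -> h t = 0.
Proof. intros H. unfold h, hp. apply Rmax_left. destruct H; nra. Qed.

Lemma h_in t : 1/4 <= t <= 1/2 -> h t = hp t.
Proof. intros H. unfold h, hp. apply Rmax_right. nra. Qed.

Lemma out_dec t : ~(1/4<=t<=1/2) -> t <= 1/4 \/ 1/2 <= t.
Proof. intros H. destruct (Rle_dec (1/4) t); [right; destruct (Rle_dec t (1/2)); [exfalso; apply H; lra|lra] | left; lra]. Qed.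

Lemma h_lip t1 t2 : Rabs (h t1 - h t2) <= Rabs (t1 - t2) / 4.
Proof.
  assert (G : forall u v, 1/4 <= u <= 1/2 -> ~ (1/4 <= v <= 1/2) ->
     Rabs (hp u - 0) <= Rabs (u - v) / 4).
  { intros u v Hu Hv. unfold hp. rewrite Rminus_0_r.
    rewrite Rabs_pos_eq by nra.
    destruct (Rlt_dec v (1/4)).
    - rewrite Rabs_pos_eq by lra. nra.
    - rewrite Rabs_left by lra. nra. }
  destruct (Classical_Prop.classic (1/4<=t1<=1/2)) as [I1|O1];
  destruct (Classical_Prop.classic (1/4<=t2<=1/2)) as [I2|O2].
  2: { rewrite (h_in t1 I1), (h_out t2 (out_dec t2 O2)). apply G; auto. }
  2: { rewrite (h_out t1 (out_dec t1 O1)), (h_in t2 I2).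
       rewrite Rabs_minus_sym, (Rabs_minus_sym t1). apply G; auto. }
  2: { rewrite (h_out t1 (out_dec t1 O1)), (h_out t2 (out_dec t2 O2)).
       rewrite Rminus_0_r, Rabs_R0. apply Rmult_le_pos; [apply Rabs_pos|lra]. }
  rewrite (h_in t1 I1), (h_in t2 I2).
  unfold hp. replace ((t1 - 1 / 4) * (1 / 2 - t1) - (t2 - 1 / 4) * (1 / 2 - t2))
    with ((t1 - t2) * (3/4 - t1 - t2)) by field.
  rewrite Rabs_mult. assert (Rabs (3/4 - t1 - t2) <= 1/4) by (apply Rabs_le; lra).
  pose proof (Rabs_pos (t1 - t2)). nra.
Qed.

Definition s (k : nat) : R := / (4 ^ (k + 3)).
Definition aa (k : nat) : R := s k * s k.

Lemma pow4_pos n : 0 < 4 ^ n.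
Proof. apply pow_lt; lra. Qed.

Lemma s_pos k : 0 < s k.
Proof. unfold s. apply Rinv_0_lt_compat, pow4_pos. Qed.

Lemma aa_pos k : 0 < aa k.
Proof. unfold aa. pose proof (s_pos k). nra. Qed.

Lemma s_S k : s (S k) = s k / 4.
Proof.
  unfold s. replace (S k + 3)%nat with (S (k + 3)) by lia. simpl.
  pose proof (pow4_pos (k+3)). field. lra.
Qed.

Lemma inv_s k : / s k = 4 ^ (k + 3).
Proof. unfold s. rewrite Rinv_inv. auto. Qed.

Lemma s_le k : s k <= 1/64.
Proof.
  induction k.
  - unfold s. simpl. lra.
  - rewrite s_S. pose proof (s_pos k). lra.
Qed.

Lemma aa_le k : aa k <= 1/4096.
Proof. unfold aa. pose proof (s_le k). pose proof (s_pos k). nra. Qed.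

Lemma s_add m k : s (m + k) = s m * (/4) ^ k.
Proof.
  induction k.
  - rewrite Nat.add_0_r. simpl. ring.
  - replace (m + S k)%nat with (S (m + k)) by lia. rewrite s_S, IHk. simpl. field.
Qed.

Lemma is_series_s m : is_series (fun k => s (m + k)) (s m * (4/3)).
Proof.
  apply is_series_ext with (fun k => ((/4) ^ k) * s m).
  { intros n. change ((/4) ^ n * s m = s (m + n)). rewrite s_add. ring. }
  replace (s m * (4/3)) with ((/ (1 - /4)) * s m) by field.
  apply is_series_scal_r. apply is_series_geom. rewrite Rabs_pos_eq; lra.
Qed.

Lemma Series_s_c m c : Series (fun k => s (m + k) * c) = s m * (4/3) * c.
Proof. apply is_series_unique. apply is_series_scal_r. apply is_series_s. Qed.

Lemma ex_series_s_c m c : ex_series (fun k => s (m + k) * c).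
Proof. eexists. apply is_series_scal_r. apply is_series_s. Qed.

Definition term (g : R -> R) (X : nat -> R) (k : nat) (t : R) : R :=
  s k * h t * g ((X k - t) ^ 2 / (4 * aa k)).
Definition Ser (g : R -> R) (X : nat -> R) (t : R) : R :=
  Series (fun k => term g X k t).

Section G.
Variable g : R -> R.
Hypothesis gb : forall z, Rabs (g z) <= 1.
Hypothesis gl : forall z w, Rabs (g z - g w) <= Rabs (z - w).

Lemma term_bound X k t : Rabs (term g X k t) <= s k * (1/64).
Proof.
  unfold term. rewrite !Rabs_mult. rewrite (Rabs_pos_eq (s k)) by (apply Rlt_le, s_pos).
  rewrite (Rabs_pos_eq (h t)) by apply h_ge0.
  pose proof (gb ((X k - t) ^ 2 / (4 * aa k))). pose proof (h_le t). pose proof (h_ge0 t).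
  pose proof (s_pos k). pose proof (Rabs_pos (g ((X k - t) ^ 2 / (4 * aa k)))).
  rewrite Rmult_assoc. apply Rmult_le_compat_l; [lra|]. nra.
Qed.

Lemma ex_ser X t : ex_series (fun k => term g X k t).
Proof.
  apply ex_series_Rabs. apply (@ex_series_le R_AbsRing R_CompleteNormedModule _ (fun k => s (0 + k) * (1/64))).
  - intros n. simpl. unfold norm; simpl. unfold abs; simpl. rewrite Rabs_Rabsolu. apply term_bound.
  - apply ex_series_s_c.
Qed.

Lemma term_diff1 X k t1 t2 : Rabs (term g X k t1 - term g X k t2) <= s k * (1/32).
Proof.
  unfold Rminus. eapply Rle_trans; [apply Rabs_triang|]. rewrite Rabs_Ropp.
  pose proof (term_bound X k t1). pose proof (term_bound X k t2). lra.
Qed.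

Lemma hg_diff (X ia t1 t2 : R) : Rabs X <= 1/160 -> 1 <= ia ->
  Rabs (h t1 * g ((X - t1) ^ 2 * ia / 4) - h t2 * g ((X - t2) ^ 2 * ia / 4))
  <= Rabs (t1 - t2) * ia.
Proof.
  intros HX Hia.
  set (g1 := g ((X - t1) ^ 2 * ia / 4)). set (g2 := g ((X - t2) ^ 2 * ia / 4)).
  pose proof (gb ((X - t1) ^ 2 * ia / 4)) as B1. pose proof (gb ((X - t2) ^ 2 * ia / 4)) as B2.
  fold g1 in B1. fold g2 in B2.
  pose proof (h_lip t1 t2) as HL. pose proof (Rabs_pos (t1 - t2)).
  pose proof (h_ge0 t1). pose proof (h_ge0 t2). pose proof (h_le t2).
  destruct (Classical_Prop.classic (1/4<=t1<=1/2 /\ 1/4<=t2<=1/2)) as [[I1 I2]|O].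
  - replace (h t1 * g1 - h t2 * g2) with ((h t1 - h t2) * g1 + h t2 * (g1 - g2)) by ring.
    eapply Rle_trans; [apply Rabs_triang|]. rewrite !Rabs_mult.
    rewrite (Rabs_pos_eq (h t2)) by auto.
    assert (Rabs (g1 - g2) <= Rabs (t1 - t2) * ia / 2).
    { unfold g1, g2. eapply Rle_trans; [apply gl|].
      replace ((X - t1) ^ 2 * ia / 4 - (X - t2) ^ 2 * ia / 4)
        with ((t2 - t1) * (2 * X - t1 - t2) * (ia / 4)) by field.
      rewrite !Rabs_mult. rewrite (Rabs_pos_eq (ia/4)) by lra.
      rewrite (Rabs_minus_sym t2 t1).
      assert (Rabs (2 * X - t1 - t2) <= 2).
      { apply Rabs_le. apply Rabs_le_between in HX. lra. }
      assert (Rabs (t1 - t2) * Rabs (2 * X - t1 - t2) <= Rabs (t1 - t2) * 2)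
        by (apply Rmult_le_compat_l; lra).
      apply Rle_trans with (Rabs (t1 - t2) * 2 * (ia / 4)).
      { apply Rmult_le_compat_r; lra. }
      lra. }
    pose proof (Rabs_pos g1). pose proof (Rabs_pos (h t1 - h t2)). pose proof (Rabs_pos (g1 - g2)).
    assert (Rabs (h t1 - h t2) * Rabs g1 <= Rabs (t1 - t2) / 4) by nra.
    assert (h t2 * Rabs (g1 - g2) <= (1/64) * (Rabs (t1 - t2) * ia / 2)) by nra.
    nra.
  - assert (h t1 = 0 \/ h t2 = 0) as [Z|Z].
    { destruct (Classical_Prop.classic (1/4<=t1<=1/2)) as [I1|O1].
      - right. apply h_out. apply out_dec. tauto.
      - left. apply h_out. apply out_dec. auto. }
    + rewrite Z in HL |- *. rewrite Rmult_0_l, Rminus_0_l, Rabs_Ropp, Rabs_mult.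
      rewrite Rminus_0_l, Rabs_Ropp, Rabs_pos_eq in HL by auto.
      rewrite (Rabs_pos_eq (h t2)) by auto.
      pose proof (Rabs_pos g2). 
      assert (h t2 * Rabs g2 <= h t2 * 1) by (apply Rmult_le_compat_l; lra). nra.
    + rewrite Z in HL |- *. rewrite Rmult_0_l, Rminus_0_r, Rabs_mult.
      rewrite Rminus_0_r, Rabs_pos_eq in HL by auto.
      rewrite (Rabs_pos_eq (h t1)) by auto.
      pose proof (Rabs_pos g1). 
      assert (h t1 * Rabs g1 <= h t1 * 1) by (apply Rmult_le_compat_l; lra). nra.
Qed.

Lemma term_diff2 X k t1 t2 : Rabs (X k) <= 1/160 ->
  Rabs (term g X k t1 - term g X k t2) <= Rabs (t1 - t2) / s k.
Proof.
  intros HX. unfold term.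
  pose proof (s_pos k) as Hs. pose proof (aa_le k). pose proof (aa_pos k).
  set (ia := / aa k).
  assert (E : forall t, (X k - t) ^ 2 / (4 * aa k) = (X k - t) ^ 2 * ia / 4).
  { intros t. unfold ia. field. lra. }
  rewrite !E.
  replace (s k * h t1 * g ((X k - t1) ^ 2 * ia / 4) - s k * h t2 * g ((X k - t2) ^ 2 * ia / 4))
    with (s k * (h t1 * g ((X k - t1) ^ 2 * ia / 4) - h t2 * g ((X k - t2) ^ 2 * ia / 4))) by ring.
  rewrite Rabs_mult, Rabs_pos_eq by lra.
  assert (1 <= ia).
  { unfold ia. rewrite <- Rinv_1. apply Rinv_le_contravar; lra. }
  pose proof (hg_diff (X k) ia t1 t2 HX H1).
  replace (Rabs (t1 - t2) / s k) with (s k * (Rabs (t1 - t2) * ia)).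
  2: { unfold ia, aa. field. lra. }
  apply Rmult_le_compat_l; lra.
Qed.

End G.

Lemma s_le_geom N : s N <= (/4) ^ N.
Proof.
  pose proof (s_add 0 N) as E. simpl in E. rewrite E.
  assert (s 0 = 1/64) by (unfold s; simpl; field). rewrite H.
  pose proof (pow_lt (/4) N ltac:(lra)). lra.
Qed.

Lemma exists_m d : 0 < d -> d < aa 0 -> exists m, aa (S m) < d <= aa m.
Proof.
  intros Hd Hd0.
  destruct (pow_lt_1_zero (/4) ltac:(rewrite Rabs_pos_eq; lra) d Hd) as [N HN].
  specialize (HN N (le_n N)). rewrite Rabs_pos_eq in HN by (apply pow_le; lra).
  assert (aa N < d).
  { unfold aa. pose proof (s_le N). pose proof (s_pos N). pose proof (s_le_geom N). nra. }
  clear HN. revert H. induction N; intros H.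
  - lra.
  - destruct (Rlt_le_dec (aa N) d) as [L|L]; auto. exists N; split; auto.
Qed.

Lemma sum_bound (D : nat -> R) d : 0 <= d -> (forall k, D k <= d * 4 ^ (k + 3)) ->
  forall n, sum_f_R0 D n <= d * 4 ^ (n + 4) / 3.
Proof.
  intros Hd HD. induction n.
  - simpl. specialize (HD 0%nat). simpl in HD. lra.
  - simpl. specialize (HD (S n)).
    replace (S n + 3)%nat with (n + 4)%nat in HD by lia.
    replace (S (n + 4)) with (S (n + 4)) by lia.
    replace (S n + 4)%nat with (S (n + 4)) by lia. simpl.
    pose proof (pow4_pos (n+4)). nra.
Qed.

Section G.
Variable g : R -> R.
Hypothesis gb : forall z, Rabs (g z) <= 1.
Hypothesis gl : forall z w, Rabs (g z - g w) <= Rabs (z - w).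

Lemma Ser_holder X (HX : forall k, Rabs (X k) <= 1/160) t1 t2 :
  Rabs (Ser g X t1 - Ser g X t2) <= sqrt (Rabs (t1 - t2)).
Proof.
  unfold Ser. rewrite <- Series_minus by (apply ex_ser; auto).
  set (D := fun k => term g X k t1 - term g X k t2).
  set (d := Rabs (t1 - t2)).
  assert (B1 : forall k, Rabs (D k) <= s k * (1/32)) by (intros; apply term_diff1; auto).
  assert (B2 : forall k, Rabs (D k) <= d / s k) by (intros; apply term_diff2; auto).
  assert (exD : forall m, ex_series (fun k => Rabs (D (m + k)%nat))).
  { intros m. apply (@ex_series_le R_AbsRing R_CompleteNormedModule _ (fun k => s (m + k) * (1/32))).
    - intros n. unfold norm; simpl. unfold abs; simpl. rewrite Rabs_Rabsolu. apply B1.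
    - apply ex_series_s_c. }
  eapply Rle_trans; [apply Series_Rabs; apply (exD 0%nat)|].
  assert (Tail : forall m, Series (fun k => Rabs (D (m + k)%nat)) <= s m * (4/3) * (1/32)).
  { intros m. rewrite <- Series_s_c. apply Series_le; [|apply ex_series_s_c].
    intros n. split; [apply Rabs_pos| apply B1]. }
  assert (Hd : 0 <= d) by apply Rabs_pos.
  destruct (Req_dec d 0) as [Z|NZ].
  { apply Rle_trans with (Series (fun k => 0 * s k)).
    - apply Series_le.
      + intros n. split; [apply Rabs_pos|]. rewrite Rmult_0_l. specialize (B2 n).
        rewrite Z in B2. unfold Rdiv in B2. rewrite Rmult_0_l in B2. lra.
      + apply (ex_series_ext (fun k => s (0 + k) * 0)); [intros; simpl; ring|]. apply (ex_series_s_c 0 0).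
    - rewrite Series_scal_l. rewrite Rmult_0_l. apply sqrt_pos. }
  assert (Hd' : 0 < d) by lra.
  pose proof (Tail 0%nat) as T0. simpl in T0.
  assert (Es0 : s 0 = 1/64) by (unfold s; simpl; field).
  assert (aa 0 = 1/4096) by (unfold aa; rewrite Es0; field).
  destruct (Rlt_le_dec d (aa 0)) as [Small|Big].
  2: { rewrite Es0 in T0. apply Rle_trans with (1/1536); [lra|].
       apply Rle_trans with (sqrt (1/64 * (1/64))).
       - rewrite sqrt_square; lra.
       - apply sqrt_le_1; lra. }
  destruct (exists_m d Hd' Small) as [m [Hm1 Hm2]].
  assert (Sq1 : s (S m) < sqrt d).
  { rewrite <- (sqrt_square (s (S m))) by (apply Rlt_le, s_pos). apply sqrt_lt_1; auto.
    apply Rlt_le, aa_pos. }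
  assert (Sq2 : sqrt d <= s m).
  { rewrite <- (sqrt_square (s m)) by (apply Rlt_le, s_pos). apply sqrt_le_1; auto.
    apply Rlt_le, aa_pos. }
  pose proof (sqrt_pos d) as Sp.
  rewrite s_S in Sq1.
  destruct m as [|m'].
  { apply Rle_trans with (s 0 * (4 / 3) * (1 / 32)); [auto|]. lra. }
  rewrite (Series_incr_n _ (S m')) by (lia || apply (exD 0%nat)).
  simpl Init.Nat.pred.
  pose proof (Tail (S m')) as TS.
  assert (SB : sum_f_R0 (fun k => Rabs (D k)) m' <= d * 4 ^ (m' + 4) / 3).
  { apply sum_bound; auto. intros k. rewrite <- inv_s. apply B2. }
  assert (E4 : 4 ^ (m' + 4) = / s (S m')).
  { rewrite inv_s. f_equal; lia. }
  rewrite E4 in SB.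
  assert (d <= sqrt d * s (S m')).
  { rewrite <- (sqrt_sqrt d) at 1 by lra. apply Rmult_le_compat_l; auto. }
  pose proof (s_pos (S m')).
  assert (d * / s (S m') <= sqrt d).
  { apply Rmult_le_reg_r with (s (S m')); auto. rewrite Rmult_assoc, Rinv_l by lra. lra. }
  lra.
Qed.

End G.

Section IBP.
Variables xk xj ak aj : R.
Hypothesis Haj : 0 < aj.
Hypothesis Hak : 16 * aj <= ak.
Hypothesis Hxk : Rabs xk <= 1/160.
Hypothesis Hxj : Rabs xj <= 1/160.

Definition th (t : R) := (xk - t) ^ 2 / (4 * ak) - (xj - t) ^ 2 / (4 * aj).
Definition Dd (t : R) := (t - xk) / (2 * ak) - (t - xj) / (2 * aj).
Definition Dp := / (2 * ak) - / (2 * aj).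
Definition up (t : R) := ((3/4 - 2 * t) * Dd t - hp t * Dp) / (Dd t) ^ 2.

Lemma Dd_neg t : 1/4 <= t <= 1/2 -> Dd t <= - / (10 * aj).
Proof.
  intros Ht. unfold Dd.
  assert (Hak' : 0 < ak) by lra.
  apply Rabs_le_between in Hxk. apply Rabs_le_between in Hxj.
  set (ij := / aj). set (ik := / ak).
  assert (Hij : 0 < ij) by (apply Rinv_0_lt_compat; lra).
  assert (Hik : 0 < ik) by (apply Rinv_0_lt_compat; lra).
  assert (ik <= ij / 16).
  { unfold ik, ij. replace (/ aj / 16) with (/ (16 * aj)) by (field; lra).
    apply Rinv_le_contravar; lra. }
  replace ((t - xk) / (2 * ak) - (t - xj) / (2 * aj)) with ((t - xk) * ik / 2 - (t - xj) * ij / 2)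
    by (unfold ik, ij; field; lra).
  replace (- / (10 * aj)) with (- ij / 10) by (unfold ij; field; lra).
  assert ((t - xk) * ik <= (81/160) * ik) by (apply Rmult_le_compat_r; lra).
  assert ((39/160) * ij <= (t - xj) * ij) by (apply Rmult_le_compat_r; lra).
  lra.
Qed.

Lemma up_bound t : 1/4 <= t <= 1/2 -> Rabs (up t) <= 4 * aj.
Proof.
  intros Ht. pose proof (Dd_neg t Ht) as HD.
  assert (Hak' : 0 < ak) by lra.
  assert (Hij : 0 < / aj) by (apply Rinv_0_lt_compat; lra).
  assert (HDn : Dd t < 0).
  { assert (0 < / (10 * aj)) by (apply Rinv_0_lt_compat; lra). lra. }
  set (e := / Dd t).
  assert (He : - (10 * aj) <= e < 0).
  { unfold e. split.
    - assert (/ Dd t = - / (- Dd t)) by (field; lra). rewrite H.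
      apply Ropp_le_contravar. replace (10 * aj) with (/ / (10 * aj)) by (rewrite Rinv_inv; auto).
      apply Rinv_le_contravar; [apply Rinv_0_lt_compat; lra| lra].
    - apply Rinv_lt_0_compat; lra. }
  assert (Eu : up t = (3/4 - 2 * t) * e - hp t * Dp * (e * e)).
  { unfold up, e. field. lra. }
  rewrite Eu.
  assert (HDp : - / (2 * aj) <= Dp <= 0).
  { unfold Dp. assert (0 < / (2 * ak)) by (apply Rinv_0_lt_compat; lra).
    assert (/ (2 * ak) <= / (2 * aj)) by (apply Rinv_le_contravar; lra). lra. }
  assert (Hh : 0 <= hp t <= 1/64).
  { unfold hp. split; [nra|]. pose proof (pow2_ge_0 (t - 3/8)). nra. }
  assert (Hhp : Rabs (3/4 - 2 * t) <= 1/4) by (apply Rabs_le; lra).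
  pose proof (Rabs_triang ((3/4 - 2 * t) * e) (- (hp t * Dp * (e * e)))) as TR.
  rewrite Rabs_Ropp in TR. fold (Rminus ((3/4 - 2 * t) * e) (hp t * Dp * (e * e))) in TR.
  assert (T1 : Rabs ((3/4 - 2 * t) * e) <= (1/4) * (10 * aj)).
  { rewrite Rabs_mult. rewrite (Rabs_left e) by lra.
    apply Rmult_le_compat; try lra; apply Rabs_pos. }
  assert (T2 : Rabs (hp t * Dp * (e * e)) <= (1/64) * (/ aj / 2) * (10 * aj * (10 * aj))).
  { replace (hp t * Dp * (e * e)) with (- (hp t * (- Dp) * (e * e))) by ring.
    rewrite Rabs_Ropp. rewrite Rabs_pos_eq.
    2: { apply Rmult_le_pos; [apply Rmult_le_pos|]; nra. }
    apply Rmult_le_compat; [apply Rmult_le_pos; lra| nra | |].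
    - apply Rmult_le_compat; try lra. replace (/ aj / 2) with (/ (2 * aj)) by (field; lra). lra.
    - nra. }
  replace ((1/64) * (/ aj / 2) * (10 * aj * (10 * aj))) with ((100/128) * aj) in T2 by (field; lra).
  lra.
Qed.
End IBP.

Section IBP2.
Variables xk xj ak aj : R.
Hypothesis Haj : 0 < aj.
Hypothesis Hak : 16 * aj <= ak.
Hypothesis Hxk : Rabs xk <= 1/160.
Hypothesis Hxj : Rabs xj <= 1/160.

Definition FF (t : R) := hp t / Dd xk xj ak aj t * sin (th xk xj ak aj t).

Lemma FF_deriv t : Dd xk xj ak aj t <> 0 ->
  is_derive FF t (up xk xj ak aj t * sin (th xk xj ak aj t) + hp t * cos (th xk xj ak aj t)).
Proof.
  intros HD. unfold FF, up, Dp, th, hp. unfold Dd in *.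
  auto_derive.
  - auto.
  - assert (ak <> 0) by lra. assert (aj <> 0) by lra.
    replace ((xk + - t) * ((xk + - t) * 1) * / (4 * ak) + - ((xj + - t) * ((xj + - t) * 1) * / (4 * aj)))
      with ((xk - t) ^ 2 / (4 * ak) - (xj - t) ^ 2 / (4 * aj)) by (field; lra).
    replace ((t + - xk) * / (2 * ak) + - ((t + - xj) * / (2 * aj)))
      with ((t - xk) / (2 * ak) - (t - xj) / (2 * aj)) by (field; lra).
    set (D := (t - xk) / (2 * ak) - (t - xj) / (2 * aj)) in *.
    set (S := sin ((xk - t) ^ 2 / (4 * ak) - (xj - t) ^ 2 / (4 * aj))).
    set (Co := cos ((xk - t) ^ 2 / (4 * ak) - (xj - t) ^ 2 / (4 * aj))).
    assert (ED : - (1) * ((1 + 1) * ((xk + - t) * 1)) * / (4 * ak) + - (- (1) * ((1 + 1) * ((xj + - t) * 1)) * / (4 * aj)) = D) by (unfold D; field; lra).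
    rewrite ED. field. auto.
Qed.

Lemma Dd_ne t : 1/4 <= t <= 1/2 -> Dd xk xj ak aj t <> 0.
Proof.
  intros Ht. pose proof (Dd_neg xk xj ak aj Haj Hak Hxk Hxj t Ht).
  assert (0 < / (10 * aj)) by (apply Rinv_0_lt_compat; lra). lra.
Qed.

Lemma cont_upsin t : 1/4 <= t <= 1/2 ->
  continuous (fun t => up xk xj ak aj t * sin (th xk xj ak aj t)) t.
Proof.
  intros Ht. pose proof (Dd_ne t Ht) as HD.
  apply (@ex_derive_continuous R_AbsRing R_NormedModule). unfold up, Dp, th, hp. unfold Dd in *.
  auto_derive. assert (ak <> 0) by lra. assert (aj <> 0) by lra.
  replace ((t + - xk) * / (2 * ak) + - ((t + - xj) * / (2 * aj)))
      with ((t - xk) / (2 * ak) - (t - xj) / (2 * aj)) by (field; lra).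
  rewrite Rmult_1_r. apply Rmult_integral_contrapositive_currified; auto.
Qed.

Lemma cont_hpcos t : continuous (fun t => hp t * cos (th xk xj ak aj t)) t.
Proof.
  apply (@ex_derive_continuous R_AbsRing R_NormedModule). unfold th, hp.
  auto_derive. split; lra.
Qed.

Lemma cont_Gd t : 1/4 <= t <= 1/2 ->
  continuous (fun t => up xk xj ak aj t * sin (th xk xj ak aj t) + hp t * cos (th xk xj ak aj t)) t.
Proof.
  intros Ht. apply (continuous_plus (fun t => up xk xj ak aj t * sin (th xk xj ak aj t))
                                     (fun t => hp t * cos (th xk xj ak aj t))).
  - apply cont_upsin; auto.
  - apply cont_hpcos.
Qed.

Lemma ibp_main : Rabs (RInt (fun t => hp t * cos (th xk xj ak aj t)) (1/4) (1/2)) <= aj.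
Proof.
  assert (I1 : is_RInt (fun t => up xk xj ak aj t * sin (th xk xj ak aj t) + hp t * cos (th xk xj ak aj t))
                 (1/4) (1/2) (minus (FF (1/2)) (FF (1/4)))).
  { apply (@is_RInt_derive R_CompleteNormedModule).
    - intros x Hx. rewrite Rmin_left, Rmax_right in Hx by lra. apply FF_deriv, Dd_ne; auto.
    - intros x Hx. rewrite Rmin_left, Rmax_right in Hx by lra. apply cont_Gd; auto. }
  assert (E0 : minus (FF (1/2)) (FF (1/4)) = 0).
  { unfold FF, hp. unfold minus, plus, opp; simpl. unfold Rdiv. ring. }
  rewrite E0 in I1.
  assert (I2 : ex_RInt (fun t => up xk xj ak aj t * sin (th xk xj ak aj t)) (1/4) (1/2)).
  { apply (@ex_RInt_continuous R_CompleteNormedModule). intros z Hz. rewrite Rmin_left, Rmax_right in Hz by lra.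
    apply cont_upsin; auto. }
  assert (I3 := is_RInt_minus _ _ _ _ _ _ I1 (RInt_correct _ _ _ I2)).
  assert (I4 : is_RInt (fun t => hp t * cos (th xk xj ak aj t)) (1/4) (1/2)
     (minus 0 (RInt (fun t => up xk xj ak aj t * sin (th xk xj ak aj t)) (1/4) (1/2)))).
  { eapply is_RInt_ext; [|exact I3]. intros x _. unfold minus, plus, opp; simpl. ring. }
  rewrite (is_RInt_unique _ _ _ _ I4).
  unfold minus, plus, opp; simpl. rewrite Rplus_0_l, Rabs_Ropp.
  eapply Rle_trans; [apply abs_RInt_le_const with (M := 4 * aj)|]; try lra; auto.
  intros t Ht. rewrite Rabs_mult.
  pose proof (up_bound xk xj ak aj Haj Hak Hxk Hxj t Ht).
  assert (Rabs (sin (th xk xj ak aj t)) <= 1) by (apply Rabs_le, SIN_bound).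
  pose proof (Rabs_pos (up xk xj ak aj t)). pose proof (Rabs_pos (sin (th xk xj ak aj t))). nra.
Qed.
End IBP2.

Lemma holder_cont (F : R -> R) :
  (forall t1 t2, Rabs (F t1 - F t2) <= sqrt (Rabs (t1 - t2))) -> forall x, continuous F x.
Proof.
  intros H x. unfold continuous. apply (proj2 (@filterlim_locally R_UniformSpace R_UniformSpace _ _ _ _)).
  intros eps. assert (He : 0 < eps * eps) by (pose proof (cond_pos eps); nra).
  exists (mkposreal _ He). intros y Hy. change (Rabs (y - x) < eps * eps) in Hy.
  change (Rabs (F y - F x) < eps).
  eapply Rle_lt_trans; [apply H|].
  rewrite <- (sqrt_square eps) by (apply Rlt_le, cond_pos).
  apply sqrt_lt_1; auto; [apply Rabs_pos|lra].
Qed.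

Lemma cos_b z : Rabs (cos z) <= 1.
Proof. apply Rabs_le, COS_bound. Qed.
Lemma sin_b z : Rabs (sin z) <= 1.
Proof. apply Rabs_le, SIN_bound. Qed.

Lemma cosc_b c z : Rabs (cos (z - c)) <= 1.
Proof. apply cos_b. Qed.
Lemma cosc_l c z w : Rabs (cos (z - c) - cos (w - c)) <= Rabs (z - w).
Proof. eapply Rle_trans; [apply cos_lip|]. right. f_equal. ring. Qed.

Lemma sum_s n : sum_f_R0 s n = 1/48 - (4/3) * s (S n).
Proof.
  induction n.
  - simpl. rewrite s_S. unfold s; simpl. field.
  - simpl. rewrite IHn. rewrite (s_S (S n)). field.
Qed.

Lemma RInt_sum (U : nat -> R -> R) a b n : (forall k, ex_RInt (U k) a b) ->
  ex_RInt (fun t => sum_f_R0 (fun k => U k t) n) a b /\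
  RInt (fun t => sum_f_R0 (fun k => U k t) n) a b = sum_f_R0 (fun k => RInt (U k) a b) n.
Proof.
  intros HU. induction n.
  - simpl. split; auto.
  - destruct IHn as [E1 E2]. simpl.
    split.
    + apply (@ex_RInt_plus R_NormedModule); auto.
    + rewrite <- E2. apply (@RInt_plus R_CompleteNormedModule); auto.
Qed.

Lemma RInt_hp : RInt hp (1/4) (1/2) = 1/384.
Proof.
  apply is_RInt_unique.
  assert (H := @is_RInt_derive R_CompleteNormedModule (fun t => - t^3/3 + (3/8) * t^2 - t/8) hp (1/4) (1/2)).
  replace (1/384) with (minus ((fun t => - t^3/3 + (3/8) * t^2 - t/8) (1/2)) ((fun t => - t^3/3 + (3/8) * t^2 - t/8) (1/4))).
  2: { unfold minus, plus, opp; simpl. field. }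
  apply H.
  - intros x _. unfold hp. auto_derive; auto. field.
  - intros x _. apply (@ex_derive_continuous R_AbsRing R_NormedModule). unfold hp. auto_derive; auto.
Qed.

Lemma pow4_le1 n : 0 <= (/4) ^ n <= 1.
Proof. induction n; simpl; lra. Qed.

Lemma s_mono k J : (k < J)%nat -> s J <= s k / 4.
Proof.
  intros H. replace J with (S k + (J - S k))%nat by lia. rewrite s_add, s_S.
  pose proof (s_pos k). pose proof (pow4_le1 (J - S k)). nra.
Qed.

Lemma aa_mono k J : (k < J)%nat -> 16 * aa J <= aa k.
Proof.
  intros H. pose proof (s_mono k J H). pose proof (s_pos J). unfold aa. nra.
Qed.

Section Low.
Variable X : nat -> R.
Hypothesis HX : forall k, Rabs (X k) <= 1/160.

Definition psi k t := (X k - t) ^ 2 / (4 * aa k).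
Definition Gj J t := Ser (fun z => cos (z - psi J t)) X t.

Lemma Gj_eq J t : Gj J t = Ser cos X t * cos (psi J t) + Ser sin X t * sin (psi J t).
Proof.
  unfold Gj, Ser. rewrite <- !Series_scal_r. rewrite <- Series_plus.
  2: { apply ex_series_scal_r, ex_ser; apply cos_b. }
  2: { apply ex_series_scal_r, ex_ser; apply sin_b. }
  apply Series_ext. intros n. unfold term. rewrite cos_minus. ring.
Qed.

Lemma Ser_cont g (gb : forall z, Rabs (g z) <= 1) (gl : forall z w, Rabs (g z - g w) <= Rabs (z - w)) t :
  continuous (Ser g X) t.
Proof. apply holder_cont. intros; apply Ser_holder; auto. Qed.

Lemma psi_cont J t : continuous (psi J) t.
Proof. apply (@ex_derive_continuous R_AbsRing R_NormedModule). unfold psi. auto_derive.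
  pose proof (aa_pos J). lra. Qed.

Lemma Gj_cont J t : continuous (Gj J) t.
Proof.
  apply (continuous_ext (fun t => plus (mult (Ser cos X t) (cos (psi J t))) (mult (Ser sin X t) (sin (psi J t))))).
  { intros x. rewrite Gj_eq. reflexivity. }
  apply (@continuous_plus R_UniformSpace R_AbsRing R_NormedModule);
  apply (@continuous_mult R_UniformSpace R_AbsRing).
  - apply Ser_cont; [apply cos_b|apply cos_lip].
  - apply continuous_cos_comp, psi_cont.
  - apply Ser_cont; [apply sin_b|apply sin_lip].
  - apply continuous_sin_comp, psi_cont.
Qed.


Lemma lower J' : s (S J') / 1024 <= RInt (Gj (S J')) (1/4) (1/2).
Proof.
  set (J := S J').
  set (U := fun k t => term (fun z => cos (z - psi J t)) X k t).
  set (A := fun t => sum_f_R0 (fun k => U k t) J').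
  set (T := fun t => Series (fun k => U (S J + k)%nat t)).
  assert (Dec : forall t, Gj J t = A t + U J t + T t).
  { intros t. unfold Gj, Ser. rewrite (Series_incr_n _ (S J)).
    - reflexivity.
    - lia.
    - apply ex_ser. apply cosc_b. }
  assert (UV : forall k t, 1/4 < t < 1/2 -> U k t = s k * (hp t * cos (th (X k) (X J) (aa k) (aa J) t))).
  { intros k t Ht. unfold U, term. rewrite h_in by lra. unfold th, psi. ring. }
  assert (contV : forall k t, continuous (fun t => s k * (hp t * cos (th (X k) (X J) (aa k) (aa J) t))) t).
  { intros k t. apply (@ex_derive_continuous R_AbsRing R_NormedModule). unfold th, hp.
    pose proof (aa_pos k). pose proof (aa_pos J). auto_derive. split; lra. }
  assert (exV : forall k, ex_RInt (fun t => s k * (hp t * cos (th (X k) (X J) (aa k) (aa J) t))) (1/4) (1/2)).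
  { intros k. apply (@ex_RInt_continuous R_CompleteNormedModule). intros; apply contV. }
  assert (exU : forall k, ex_RInt (U k) (1/4) (1/2)).
  { intros k. eapply (@ex_RInt_ext R_NormedModule); [|apply exV].
    intros x Hx. rewrite Rmin_left, Rmax_right in Hx by lra. symmetry; apply UV; auto. }
  assert (RU : forall k, RInt (U k) (1/4) (1/2) = s k * RInt (fun t => hp t * cos (th (X k) (X J) (aa k) (aa J) t)) (1/4) (1/2)).
  { intros k. rewrite (@RInt_ext R_CompleteNormedModule (U k) (fun t => s k * (hp t * cos (th (X k) (X J) (aa k) (aa J) t)))).
    - apply (@RInt_scal R_CompleteNormedModule (fun t => hp t * cos (th (X k) (X J) (aa k) (aa J) t))).
      apply (@ex_RInt_continuous R_CompleteNormedModule). intros z _.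
      apply (@ex_derive_continuous R_AbsRing R_NormedModule). unfold th, hp.
      pose proof (aa_pos k). pose proof (aa_pos J). auto_derive. split; lra.
    - intros x Hx. rewrite Rmin_left, Rmax_right in Hx by lra. apply UV; auto. }
  assert (RJ : RInt (U J) (1/4) (1/2) = s J / 384).
  { rewrite (@RInt_ext R_CompleteNormedModule (U J) (fun t => scal (s J) (hp t))).
    - rewrite (@RInt_scal R_CompleteNormedModule). rewrite RInt_hp. unfold scal; simpl; unfold mult; simpl. field.
      apply (@ex_RInt_continuous R_CompleteNormedModule). intros z _.
      apply (@ex_derive_continuous R_AbsRing R_NormedModule). unfold hp. auto_derive. auto.
    - intros x Hx. rewrite Rmin_left, Rmax_right in Hx by lra. unfold U, term. rewrite h_in by lra.
      rewrite Rminus_diag, cos_0. unfold scal; simpl; unfold mult; simpl. ring. }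
  destruct (RInt_sum U (1/4) (1/2) J' exU) as [exA RA].
  assert (CA : Rabs (RInt A (1/4) (1/2)) <= aa J / 48).
  { unfold A. rewrite RA. eapply Rle_trans; [apply sum_f_R0_triangle|].
    apply Rle_trans with (sum_f_R0 (fun k => s k * aa J) J').
    - apply sum_Rle. intros k Hk. rewrite RU, Rabs_mult, Rabs_pos_eq by (apply Rlt_le, s_pos).
      apply Rmult_le_compat_l; [apply Rlt_le, s_pos|].
      apply ibp_main; auto. apply aa_pos. apply aa_mono. unfold J; lia.
    - rewrite <- scal_sum, sum_s. pose proof (s_pos (S J')). pose proof (aa_pos J). nra. }
  assert (TB : forall t, Rabs (T t) <= s J / 192).
  { intros t. unfold T. 
    assert (EX : ex_series (fun k => Rabs (U (S J + k)%nat t))).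
    { apply (@ex_series_le R_AbsRing R_CompleteNormedModule _ (fun k => s (S J + k) * (1/64))).
      - intros n. unfold norm; simpl. unfold abs; simpl. rewrite Rabs_Rabsolu. apply term_bound, cosc_b.
      - apply ex_series_s_c. }
    eapply Rle_trans; [apply Series_Rabs; auto|].
    apply Rle_trans with (Series (fun k => s (S J + k) * (1/64))).
    - apply Series_le; [|apply ex_series_s_c]. intros n; split; [apply Rabs_pos|]. apply term_bound, cosc_b.
    - rewrite Series_s_c, s_S. lra. }
  assert (exG : ex_RInt (Gj J) (1/4) (1/2)).
  { apply (@ex_RInt_continuous R_CompleteNormedModule). intros; apply Gj_cont. }
  assert (exT : ex_RInt T (1/4) (1/2)).
  { apply (@ex_RInt_ext R_NormedModule (fun t => minus (minus (Gj J t) (A t)) (U J t))).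
    - intros x _. rewrite Dec. unfold minus, plus, opp; simpl. ring.
    - apply (@ex_RInt_minus R_NormedModule); [apply (@ex_RInt_minus R_NormedModule)|]; auto. }
  assert (RG : RInt (Gj J) (1/4) (1/2) = RInt A (1/4) (1/2) + RInt (U J) (1/4) (1/2) + RInt T (1/4) (1/2)).
  { rewrite (@RInt_ext R_CompleteNormedModule (Gj J) (fun t => plus (plus (A t) (U J t)) (T t))).
    - rewrite (@RInt_plus R_CompleteNormedModule).
      + rewrite (@RInt_plus R_CompleteNormedModule); auto.
      + apply (@ex_RInt_plus R_NormedModule); auto.
      + auto.
    - intros x _. rewrite Dec. reflexivity. }
  assert (CT : Rabs (RInt T (1/4) (1/2)) <= (1/2 - 1/4) * (s J / 192)).
  { apply abs_RInt_le_const; auto. lra. }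
  rewrite RG, RJ.
  assert (aa J <= s J / 64) by (unfold aa; pose proof (s_le J); pose proof (s_pos J); nra).
  apply Rabs_le_between in CA. apply Rabs_le_between in CT.
  fold J. lra.
Qed.

End Low.

Lemma is_RInt_gen_supp (F : R -> C) (l : C) :
  (forall t, t <= 1/4 \/ 1/2 <= t -> F t = RtoC 0) ->
  @is_RInt C_R_NormedModule F (1/4) (1/2) l ->
  @is_RInt_gen C_R_NormedModule F (Rbar_locally m_infty) (Rbar_locally p_infty) l.
Proof.
  intros Hz Hl P HP.
  apply Filter_prod with (fun a => a < 1/4) (fun b => 1/2 < b).
  - exists (1/4). auto.
  - exists (1/2). auto.
  - intros a b Ha Hb. exists l. split; [|apply locally_singleton; auto].
    simpl.
    assert (Z : forall a b, a <= b -> (forall t, a < t < b -> F t = RtoC 0) ->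
                 @is_RInt C_R_NormedModule F a b (@zero C_R_NormedModule)).
    { intros a0 b0 Hab HF.
      eapply (@is_RInt_ext C_R_NormedModule (fun _ => @zero C_R_NormedModule)).
      - intros x Hx. rewrite Rmin_left, Rmax_right in Hx by lra. rewrite HF by lra. reflexivity.
      - pose proof (@is_RInt_const C_R_NormedModule a0 b0 zero) as HH. rewrite (@scal_zero_r R_Ring (NormedModule.ModuleSpace R_AbsRing C_R_NormedModule)) in HH. exact HH. }
    replace l with (@plus C_R_NormedModule (@plus C_R_NormedModule zero l) zero).
    2: { rewrite plus_zero_r, plus_zero_l. auto. }
    apply (@is_RInt_Chasles C_R_NormedModule) with (1/2).
    + apply (@is_RInt_Chasles C_R_NormedModule) with (1/4); auto.
      apply Z; [lra|]. intros t Ht. apply Hz. lra.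
    + apply Z; [lra|]. intros t Ht. apply Hz. lra.
Qed.

Lemma Ser_zero g X t : h t = 0 -> Ser g X t = 0.
Proof.
  intros H. unfold Ser, term. rewrite H.
  rewrite (Series_ext _ (fun k => 0 * s k)) by (intros; ring).
  rewrite Series_scal_l. ring.
Qed.

Lemma cmod_cexpi x : Cmod (cexpi x) = 1.
Proof.
  unfold Cmod, cexpi. cbn [fst snd].
  replace (cos x ^ 2 + sin x ^ 2) with 1 by (rewrite <- (sin2_cos2 x); unfold Rsqr; ring).
  apply sqrt_1.
Qed.

Theorem proposition1 (M : R) (b : R -> R) :
  0 < M ->
  (forall a, 0 <= a <= 1 -> Rabs (b a) <= M) ->
  b 0 = 1 ->
  exists (f : R -> C) (u0 : R),
    Holder_half_supp f /\ 0 < u0 < 1 / (80 * M) /\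
    ~ filterlim (fun a => Lop b a f u0) (at_right 0) (locally (L0 b f u0)).
Proof.
  intros HM Hb Hb0.
  assert (M1 : 1 <= M).
  { pose proof (Hb 0 ltac:(lra)). rewrite Hb0, Rabs_R1 in H. lra. }
  set (u0 := 1 / (160 * M)).
  assert (Hu0 : 0 < u0 <= 1/160).
  { unfold u0. split. apply Rdiv_lt_0_compat; lra.
    unfold Rdiv. rewrite !Rmult_1_l. apply Rinv_le_contravar; lra. }
  set (X := fun k => b (aa k) * u0).
  assert (HX : forall k, Rabs (X k) <= 1/160).
  { intros k. unfold X. rewrite Rabs_mult, (Rabs_pos_eq u0) by lra.
    assert (0 <= aa k <= 1) by (pose proof (aa_pos k); pose proof (aa_le k); lra).
    pose proof (Hb _ H). pose proof (Rabs_pos (b (aa k))).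
    apply Rle_trans with (M * u0). apply Rmult_le_compat_r; lra.
    unfold u0. right. field. lra. }
  set (f := fun t => (Ser cos X t, Ser sin X t) : C).
  exists f, u0.
  split; [|split].
  -
    split.
    + intros t Ht. unfold f. rewrite !Ser_zero by (apply h_out; lra). reflexivity.
    + exists 2. intros t1 t2.
      eapply Rle_trans; [apply Cmod_2Rmax|]. simpl.
      assert (A1 : Rabs (Ser cos X t1 + - Ser cos X t2) <= sqrt (Rabs (t1 - t2)))
        by (apply Ser_holder; auto; [apply cos_b|apply cos_lip]).
      assert (A2 : Rabs (Ser sin X t1 + - Ser sin X t2) <= sqrt (Rabs (t1 - t2)))
        by (apply Ser_holder; auto; [apply sin_b|apply sin_lip]).
      assert (Rmax (Rabs (Ser cos X t1 + - Ser cos X t2)) (Rabs (Ser sin X t1 + - Ser sin X t2))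
              <= sqrt (Rabs (t1 - t2))) by (apply Rmax_lub; auto).
      assert (sqrt 2 <= 2).
      { apply Rle_trans with (sqrt (2*2)); [apply sqrt_le_1; lra | rewrite sqrt_square; lra]. }
      pose proof (sqrt_pos 2). pose proof (sqrt_pos (Rabs (t1 - t2))).
      pose proof (Rmax_l (Rabs (Ser cos X t1 + - Ser cos X t2)) (Rabs (Ser sin X t1 + - Ser sin X t2))).
      pose proof (Rabs_pos (Ser cos X t1 + - Ser cos X t2)).
      nra.
  - split; [lra|]. unfold u0. apply Rmult_lt_reg_r with (160 * M); [lra|].
    field_simplify; lra.
  -
    intros Hlim.
    assert (L0e : L0 b f u0 = (0, 0)).
    { unfold L0. rewrite Hb0, Rmult_1_l. unfold f. rewrite !Ser_zero by (apply h_out; lra). reflexivity. }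
    assert (S2 : 0 < sqrt 2) by (apply sqrt_lt_R0; lra).
    assert (S2b : sqrt 2 < 2).
    { apply Rlt_le_trans with (sqrt (2*2)); [apply sqrt_lt_1; lra | rewrite sqrt_square; lra]. }
    assert (SP : 0 < sqrt (2 * PI)) by (apply sqrt_lt_R0; pose proof PI_RGT_0; lra).
    set (c0 := / (1024 * sqrt (2 * PI) * sqrt 2)).
    assert (Hc0 : 0 < c0) by (unfold c0; apply Rinv_0_lt_compat; nra).
    pose proof (proj1 (@filterlim_locally _ C_UniformSpace _ _ _ _) Hlim (mkposreal (c0/2) ltac:(lra))) as H1.
    destruct H1 as [d H1]. simpl in H1.
    destruct (pow_lt_1_zero (/4) ltac:(rewrite Rabs_pos_eq; lra) d (cond_pos d)) as [N HN].
    specialize (HN N (le_n N)). rewrite Rabs_pos_eq in HN by (apply pow_le; lra).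
    set (J := S N).
    assert (HaJ : aa J < d).
    { pose proof (aa_mono N J ltac:(unfold J; lia)). pose proof (aa_pos J).
      unfold aa in *. pose proof (s_le N). pose proof (s_pos N). pose proof (s_le_geom N). nra. }
    assert (HaJ0 : 0 < aa J) by apply aa_pos.
    specialize (H1 (aa J)).
    assert (Hb1 : ball 0 d (aa J)).
    { change (Rabs (aa J - 0) < d). rewrite Rminus_0_r, Rabs_pos_eq; lra. }
    specialize (H1 Hb1 HaJ0). rewrite L0e in H1. destruct H1 as [B1 B2].
    change (Rabs (fst (Lop b (aa J) f u0) - 0) < c0 / 2) in B1.
    change (Rabs (snd (Lop b (aa J) f u0) - 0) < c0 / 2) in B2.
    rewrite Rminus_0_r in B1, B2.
    assert (Up : Cmod (Lop b (aa J) f u0) < c0).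
    { eapply Rle_lt_trans; [apply Cmod_2Rmax|].
      assert (Rmax (Rabs (fst (Lop b (aa J) f u0))) (Rabs (snd (Lop b (aa J) f u0))) < c0/2)
        by (apply Rmax_lub_lt; auto).
      pose proof (Rmax_l (Rabs (fst (Lop b (aa J) f u0))) (Rabs (snd (Lop b (aa J) f u0)))).
      pose proof (Rabs_pos (fst (Lop b (aa J) f u0))). nra. }
    set (Fj := fun t => Cmult (f t) (cexpi (- ((b (aa J) * u0 - t) ^ 2 / (4 * aa J))))).
    assert (Efst : forall t, fst (Fj t) = Gj X J t).
    { intros t. rewrite (Gj_eq X). unfold Fj, f, cexpi, Cmult. cbn [fst snd].
      rewrite cos_neg, sin_neg. unfold psi, X. ring. }
    assert (exF1 : ex_RInt (fun t => fst (Fj t)) (1/4) (1/2)).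
    { apply (@ex_RInt_ext R_NormedModule (Gj X J)).
      - intros; rewrite Efst; auto.
      - apply (@ex_RInt_continuous R_CompleteNormedModule). intros; apply Gj_cont; auto. }
    assert (exF2 : ex_RInt (fun t => snd (Fj t)) (1/4) (1/2)).
    { apply (@ex_RInt_continuous R_CompleteNormedModule). intros z _.
      apply (continuous_ext (fun t => plus (mult (Ser cos X t) (sin (- psi X J t))) (mult (Ser sin X t) (cos (- psi X J t))))).
      { intros x. unfold Fj, f, cexpi, Cmult, psi, X. cbn [fst snd]. unfold plus, mult; simpl. ring. }
      apply (@continuous_plus R_UniformSpace R_AbsRing R_NormedModule);
      apply (@continuous_mult R_UniformSpace R_AbsRing).
      - apply Ser_cont; auto; [apply cos_b|apply cos_lip].
      - apply continuous_sin_comp. apply (continuous_opp (psi X J)), psi_cont.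
      - apply Ser_cont; auto; [apply sin_b|apply sin_lip].
      - apply continuous_cos_comp. apply (continuous_opp (psi X J)), psi_cont. }
    assert (IF : @is_RInt C_R_NormedModule Fj (1/4) (1/2)
                   (RInt (fun t => fst (Fj t)) (1/4) (1/2), RInt (fun t => snd (Fj t)) (1/4) (1/2))).
    { apply (@is_RInt_fct_extend_pair R_NormedModule R_NormedModule);
        apply (@RInt_correct R_CompleteNormedModule); auto. }
    assert (IG := is_RInt_gen_supp Fj _ ltac:(intros t Ht; unfold Fj, f; rewrite !Ser_zero by (apply h_out; lra);
                    unfold Cmult, RtoC; cbn [fst snd]; f_equal; ring) IF).
    assert (EI := @is_RInt_gen_unique C_R_CompleteNormedModule _ _ _ _ _ _ IG).
    assert (Low := lower X HX N). fold J in Low.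
    assert (EGJ : RInt (fun t => fst (Fj t)) (1/4) (1/2) = RInt (Gj X J) (1/4) (1/2)).
    { apply (@RInt_ext R_CompleteNormedModule). intros; apply Efst. }
    assert (Cmod (Lop b (aa J) f u0) >= c0).
    { unfold Lop. fold Fj. rewrite EI. rewrite !Cmod_mult, !Cmod_R, cmod_cexpi.
      eapply Rle_ge. eapply Rle_trans; [|apply Rmult_le_compat_l; [|apply Rmult_le_compat_l; [|apply re_le_Cmod]]].
      2: { apply Rabs_pos. }
      2: { apply Rmult_le_pos; [lra|apply Rabs_pos]. }
      unfold Re. cbn [fst]. rewrite EGJ.
      assert (Es : sqrt (2 * aa J) = sqrt 2 * s J).
      { unfold aa. rewrite sqrt_mult by (try lra; pose proof (s_pos J); nra).
        rewrite sqrt_square by (apply Rlt_le, s_pos). auto. }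
      rewrite Es. pose proof (s_pos J).
      rewrite (Rabs_pos_eq (/ sqrt (2 * PI))) by (apply Rlt_le, Rinv_0_lt_compat; auto).
      rewrite (Rabs_pos_eq (/ (sqrt 2 * s J))) by (apply Rlt_le, Rinv_0_lt_compat; nra).
      rewrite (Rabs_pos_eq (RInt (Gj X J) (1 / 4) (1 / 2))) by lra.
      unfold c0. apply Rle_trans with (/ sqrt (2 * PI) * (1 * / (sqrt 2 * s J) * (s J / 1024))).
      - right. field. repeat split; lra.
      - apply Rmult_le_compat_l; [apply Rlt_le, Rinv_0_lt_compat; auto|].
        apply Rmult_le_compat_l; [|auto].
        rewrite Rmult_1_l. apply Rlt_le, Rinv_0_lt_compat; nra. }
    lra.
Qed.
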